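(* Let $\mathfrak g$ be a right Leibniz algebra with bracket $[\,,]$ and let $R$ be a left Leibniz dual algebra with product $(r,s)\mapsto rs$, over a common field. Then the tensor product $\mathfrak g\otimes R$ with multiplication $(x\otimes r)\circ(y\otimes s)=[x,y]\otimes rs$ is a right-symmetric algebra.
   Context: A right Leibniz algebra satisfies $[a,[b,c]]-[[a,b],c]+[[a,c],b]=0$. A left Leibniz dual algebra satisfies $(rs)t=r(st+ts)$. An algebra is right-symmetric if $X\circ(Y\circ Z)-(X\circ Y)\circ Z=X\circ(Z\circ Y)-(X\circ Z)\circ Y$ for all $X,Y,Z$. *)

(* Defs.v *)
From mathcomp Require Import all_boot all_algebra.
Set Implicit Arguments. Unset Strict Implicit. Unset Printing Implicit Defensive.
Import GRing.Theory.
Local Open Scope ring_scope.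

Section Defs.
Variable K : fieldType.

Definition lin (U W : lmodType K) (h : U -> W) : Prop :=
  forall (a : K) (x y : U), h (a *: x + y) = a *: h x + h y.

Definition bilin (U V W : lmodType K) (f : U -> V -> W) : Prop :=
  (forall u, lin (f u)) /\ (forall v, lin (fun u => f u v)).

Definition is_tensor_product (U V T : lmodType K) (tens : U -> V -> T) : Prop :=
  bilin tens /\
  forall (W : lmodType K) (f : U -> V -> W), bilin f ->
    exists h : T -> W, [/\ lin h, (forall u v, h (tens u v) = f u v) &
      forall h' : T -> W, lin h' -> (forall u v, h' (tens u v) = f u v) ->
        forall t, h' t = h t].

Definition right_Leibniz_algebra (g : lmodType K) (br : g -> g -> g) : Prop :=
  bilin br /\
  forall a b c, br a (br b c) - br (br a b) c + br (br a c) b = 0.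

Definition left_Leibniz_dual_algebra (R : lmodType K) (m : R -> R -> R) : Prop :=
  bilin m /\ forall r s t, m (m r s) t = m r (m s t + m t s).

Definition right_symmetric_algebra (A : lmodType K) (m : A -> A -> A) : Prop :=
  bilin m /\
  forall X Y Z, m X (m Y Z) - m (m X Y) Z = m X (m Z Y) - m (m X Z) Y.

End Defs.

(* Main.v *)
Require Import Defs.
From mathcomp Require Import all_boot all_algebra.
Local Open Scope ring_scope.
Import GRing.Theory.
Set Implicit Arguments. Unset Strict Implicit.

Section H.
Variable K : fieldType.

Lemma lin0 (U W : lmodType K) (h : U -> W) : lin h -> h 0 = 0.
Proof. move=> H; have E := H 1 0 0; rewrite scaler0 addr0 scale1r in E.
by apply: (addrI (h 0)); rewrite addr0 -E. Qed.

Lemma linD (U W : lmodType K) (h : U -> W) : lin h -> forall x y, h (x + y) = h x + h y.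
Proof. by move=> H x y; have := H 1 x y; rewrite !scale1r. Qed.

Lemma linZ (U W : lmodType K) (h : U -> W) : lin h -> forall a x, h (a *: x) = a *: h x.
Proof. by move=> H a x; have := H a x 0; rewrite addr0 (lin0 H) addr0. Qed.

Lemma linB (U W : lmodType K) (h : U -> W) : lin h -> forall x y, h (x - y) = h x - h y.
Proof. move=> H x y; have := H (-1) y x; rewrite scaleN1r addrC => ->.
by rewrite scaleN1r addrC. Qed.

Lemma lin_sub (U W : lmodType K) (f g : U -> W) : lin f -> lin g ->
  lin (fun x => f x - g x).
Proof.
move=> Hf Hg a x y; rewrite Hf Hg scalerBr opprD !addrA; congr (_ - _).
by rewrite addrAC.
Qed.

Lemma lin_comp (U V W : lmodType K) (f : V -> W) (g : U -> V) : lin f -> lin g ->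
  lin (fun x => f (g x)).
Proof. by move=> Hf Hg a x y; rewrite Hg Hf. Qed.

Lemma lin_zero_of_tens (U V T W : lmodType K) (tens : U -> V -> T) (h : T -> W) :
  is_tensor_product tens -> lin h -> (forall u v, h (tens u v) = 0) -> forall t, h t = 0.
Proof.
move=> [_ Hu] Hh H0 t.
have bz : bilin (fun (_ : U) (_ : V) => (0 : W)).
  by split => ? a x y; rewrite scaler0 addr0.
have [h0 [_ _ Huniq]] := Hu W _ bz.
rewrite (Huniq h Hh H0) -(Huniq (fun _ => 0)) //.
by move=> a x y; rewrite scaler0 addr0.
Qed.

End H.

Theorem mainTheorem17 (K : fieldType) (g R T : lmodType K)
    (br : g -> g -> g) (mR : R -> R -> R)
    (tens : g -> R -> T) (circ : T -> T -> T) :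
  right_Leibniz_algebra br ->
  left_Leibniz_dual_algebra mR ->
  is_tensor_product tens ->
  bilin circ ->
  (forall x r y s, circ (tens x r) (tens y s) = tens (br x y) (mR r s)) ->
  right_symmetric_algebra circ.
Proof.
move=> [_ Hg] [[m1 m2] HR] HT [c1 c2] Hc; split; first by split.
pose G X Y Z := circ X (circ Y Z) - circ (circ X Y) Z.
pose F X Y Z := G X Y Z - G X Z Y.
have G1 : forall Y Z, lin (fun X => G X Y Z).
  move=> Y Z; apply: lin_sub; first exact: c2.
  exact: (lin_comp (c2 Z) (c2 Y)).
have G2 : forall X Z, lin (fun Y => G X Y Z).
  move=> X Z; apply: lin_sub; first exact: (lin_comp (c1 X) (c2 Z)).
  exact: (lin_comp (c2 Z) (c1 X)).
have G3 : forall X Y, lin (fun Z => G X Y Z).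
  move=> X Y; apply: lin_sub; first exact: (lin_comp (c1 X) (c1 Y)).
  exact: (c1 _).
have F1 : forall Y Z, lin (fun X => F X Y Z) by move=> Y Z; apply: lin_sub.
have F2 : forall X Z, lin (fun Y => F X Y Z) by move=> X Z; apply: lin_sub.
have F3 : forall X Y, lin (fun Z => F X Y Z) by move=> X Y; apply: lin_sub.
have [[t1 t2] _] := HT.
have pure : forall x r y s z t, F (tens x r) (tens y s) (tens z t) = 0.
  move=> x r y s z t; rewrite /F /G !Hc !HR !(linD (m1 _)).
  set P := mR r (mR s t); set Q := mR r (mR t s).
  have eA : br x (br y z) = br (br x y) z - br (br x z) y.
    by apply/eqP; rewrite -subr_eq0 opprB addrA addrAC Hg.
  have eC : br x (br z y) = br (br x z) y - br (br x y) z.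
    by apply/eqP; rewrite -subr_eq0 opprB addrA addrAC Hg.
  rewrite eA eC !(linB (t2 _)) !(linD (t1 _)).
  set u1 := tens (br (br x y) z) P; set u2 := tens (br (br x z) y) P.
  set u3 := tens (br (br x y) z) Q; set u4 := tens (br (br x z) y) Q.
  apply/eqP; rewrite subr_eq0; apply/eqP.
  rewrite !opprD !addrA [u1 - u2 - u1]addrAC subrr add0r.
  by rewrite [u4 - u3 - u4]addrAC subrr add0r addrC.
have S1 : forall x r y s Z, F (tens x r) (tens y s) Z = 0.
  by move=> x r y s; apply: (lin_zero_of_tens HT (F3 _ _)) => *; apply: pure.
have S2 : forall x r Y Z, F (tens x r) Y Z = 0.
  by move=> x r Y Z; apply: (lin_zero_of_tens HT (F2 _ Z)) => *; apply: S1.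
move=> X Y Z; apply/eqP; rewrite -subr_eq0; apply/eqP.
by apply: (lin_zero_of_tens HT (F1 Y Z)) => *; apply: S2.
Qed.
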